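(* Let $(G,\mathbf p)$ be a framework with $\mathbf p$ pinned with $\ell$-dimensional affine span, and let $E$ be an energy that is bar-like at $\mathbf p$, regarded as a function on $\ell$-pinned configuration space. Then $\mathbf p$ is a local minimum of $E$. Moreover, $(G,\mathbf p)$ is rigid (in the pinned sense below) if and only if $\mathbf p$ is a strict local minimum of $E$.
   Context: Fix a dimension $d$. A configuration is $\mathbf p=(\mathbf p_1,\dots,\mathbf p_n)$, $\mathbf p_i\in\mathbb R^d$; a framework $(G,\mathbf p)$ consists of a graph $G$ on $\{1,\dots,n\}$ and a configuration. A configuration $\mathbf q$ is in $\ell$-pinned position if $\mathbf q_1=0$ and, for $2\le i\le\ell+1$, $\mathbf q_i\in\mathrm{span}(e_1,\dots,e_{i-1})$; these form the $\ell$-pinned configuration space. If $\mathbf p$ has $\ell$-dimensional affine span, it is pinned if $\mathbf p_1,\dots,\mathbf p_{\ell+1}$ are affinely independent and $\mathbf p$ is in $\ell$-pinned position. $(G,\mathbf p)$ is (pinned) rigid if there is a neighborhood $U$ of $\mathbf p$ such that every $\ell$-pinned $\mathbf q\in U$ with $|\mathbf q_i-\mathbf q_j|=|\mathbf p_i-\mathbf p_j|$ for all edges $ij$ equals $\mathbf p$. An edge-based energy is $E(\mathbf q)=\sum_{ij\in E(G)}E_{ij}(|\mathbf q_i-\mathbf q_j|)$ for $\ell$-pinned $\mathbf q$, with $E_{ij}:\mathbb R\to\mathbb R$. It is bar-like at $\mathbf p$ if for each edge $ij$, $d_{ij}=|\mathbf p_i-\mathbf p_j|\ne0$, $E_{ij}$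 is analytic at $d_{ij}$, and $E_{ij}$ has a strict local minimum at $d_{ij}$. *)

(* Defs.v *)
From HB Require Import structures.
From mathcomp Require Import all_boot all_order all_algebra.
From mathcomp Require Import all_classical all_reals all_analysis.
Set Implicit Arguments. Unset Strict Implicit. Unset Printing Implicit Defensive.
Import Order.TTheory GRing.Theory Num.Theory numFieldNormedType.Exports.
Local Open Scope classical_set_scope.
Local Open Scope ring_scope.

Section Frameworks.
Variables (R : realType) (d n : nat).

(* Vertices 1..n+1 of the paper are the ordinals 'I_n.+1 (0-based);
   a configuration assigns to each vertex a point of R^d (coordinates 'I_d). *)
Definition config := 'I_n.+1 -> 'I_d -> R.

Definition edist (x y : 'I_d -> R) : R := Num.sqrt (\sum_(k < d) (x k - y k) ^+ 2).

Definition config_near (eps : R) (p q : config) : Prop :=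
  forall i k, `|q i k - p i k| < eps.

Definition affine_dim (p : config) (l : nat) : Prop :=
  \rank (\matrix_(i < n.+1, k < d) (p i k - p ord0 k)) = l.

(* p_1, ..., p_{l+1} (paper indexing) exist and are affinely independent. *)
Definition first_affinely_independent (p : config) (l : nat) : Prop :=
  (l <= n)%N /\
  \rank (\matrix_(i < l, k < d) (p (inord i.+1) k - p ord0 k)) = l.

(* l-pinned position: q_1 = 0 and q_i in span(e_1,...,e_{i-1}) for 2 <= i <= l+1;
   0-based: for vertex i <= l, all coordinates k >= i vanish. *)
Definition pinned_position (l : nat) (q : config) : Prop :=
  forall (i : 'I_n.+1) (k : 'I_d), (i <= l)%N -> (i <= k)%N -> q i k = 0.

Definition pinned (p : config) (l : nat) : Prop :=
  [/\ affine_dim p l, first_affinely_independent p l & pinned_position l p].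

(* Edge-based energy; the edge set of the (symmetric) graph G is {ij | i < j, G i j}. *)
Definition energy (G : rel 'I_n.+1) (Eij : 'I_n.+1 -> 'I_n.+1 -> R -> R)
  (q : config) : R :=
  \sum_(i < n.+1) \sum_(j < n.+1 | (i < j)%N && G i j) Eij i j (edist (q i) (q j)).

Definition analytic_at (f : R -> R) (x : R) : Prop :=
  exists (a : nat -> R) (r : R), 0 < r /\
    forall y, `|y - x| < r ->
      (fun N : nat => \sum_(k < N) a k * (y - x) ^+ k) @ \oo --> f y.

Definition strict_local_min_R (f : R -> R) (x : R) : Prop :=
  exists e : R, 0 < e /\ forall y, `|y - x| < e -> y != x -> f x < f y.

Definition bar_like (G : rel 'I_n.+1) (Eij : 'I_n.+1 -> 'I_n.+1 -> R -> R)
  (p : config) : Prop :=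
  forall i j : 'I_n.+1, (i < j)%N -> G i j ->
    [/\ edist (p i) (p j) != 0,
        analytic_at (Eij i j) (edist (p i) (p j)) &
        strict_local_min_R (Eij i j) (edist (p i) (p j))].

Definition pinned_local_min (l : nat) (F : config -> R) (p : config) : Prop :=
  exists eps : R, 0 < eps /\
    forall q, pinned_position l q -> config_near eps p q -> F p <= F q.

Definition pinned_strict_local_min (l : nat) (F : config -> R) (p : config) : Prop :=
  exists eps : R, 0 < eps /\
    forall q, pinned_position l q -> config_near eps p q -> q <> p -> F p < F q.

Definition pinned_rigid (G : rel 'I_n.+1) (p : config) (l : nat) : Prop :=
  exists eps : R, 0 < eps /\
    forall q, pinned_position l q -> config_near eps p q ->
      (forall i j, G i j -> edist (q i) (q j) = edist (p i) (p j)) -> q = p.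

End Frameworks.

(* Main.v *)
Require Import Defs.
From HB Require Import structures.
From mathcomp Require Import all_boot all_order all_algebra.
From mathcomp Require Import all_classical all_reals all_analysis.
From mathcomp Require Import ring lra.
Import Order.TTheory GRing.Theory Num.Theory.
Local Open Scope ring_scope.

Lemma sqrt_diff_sq (R : realType) (a b : R) : 0 <= a -> 0 <= b ->
  (Num.sqrt b - Num.sqrt a) ^+ 2 <= `|b - a|.
Proof.
move=> a0 b0.
set s := Num.sqrt b; set t := Num.sqrt a.
have s0 : 0 <= s by exact: sqrtr_ge0.
have t0 : 0 <= t by exact: sqrtr_ge0.
have e1 : s ^+ 2 = b by exact: sqr_sqrtr.
have e2 : t ^+ 2 = a by exact: sqr_sqrtr.
have -> : b - a = (s - t) * (s + t) by rewrite -e1 -e2; ring.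
rewrite normrM -[(s - t) ^+ 2]ger0_norm ?sqr_ge0 // normrX expr2 ler_wpM2l //.
rewrite [`|s + t|]ger0_norm; last by lra.
by rewrite ler_norml; apply/andP; split; lra.
Qed.

Lemma edist_sym (R : realType) (d : nat) (x y : 'I_d -> R) : Defs.edist x y = Defs.edist y x.
Proof. by rewrite /Defs.edist; congr Num.sqrt; apply: eq_bigr => k _; rewrite -sqrrN opprB. Qed.

Lemma edist_cont (R : realType) (d : nat) (x y : 'I_d -> R) (e : R) : 0 < e ->
  exists del : R, 0 < del /\ forall x' y' : 'I_d -> R,
    (forall k, `|x' k - x k| < del) -> (forall k, `|y' k - y k| < del) ->
    `|Defs.edist x' y' - Defs.edist x y| < e.
Proof.
move=> e0.
set C : R := \sum_(k < d) (4 + 4 * `|x k - y k|).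
have C0 : 0 <= C by apply: sumr_ge0 => k _; rewrite addr_ge0 // mulr_ge0.
have C1 : 0 < C + 1 by lra.
exists (Num.min 1 (e ^+ 2 / (C + 1))); split.
  by rewrite lt_min ltr01 divr_gt0 // exprn_gt0.
move=> x' y' hx hy.
set del := e ^+ 2 / (C + 1).
have hxd k : `|x' k - x k| <= 1 /\ `|x' k - x k| <= del.
  by have := hx k; rewrite lt_min => /andP[h1 h2]; split; apply: ltW.
have hyd k : `|y' k - y k| <= 1 /\ `|y' k - y k| <= del.
  by have := hy k; rewrite lt_min => /andP[h1 h2]; split; apply: ltW.
have del0 : 0 < del by rewrite divr_gt0 // exprn_gt0.
have hb : `|\sum_(k < d) (x' k - y' k) ^+ 2 - \sum_(k < d) (x k - y k) ^+ 2| <= del * C.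
  rewrite -sumrB (le_trans (ler_norm_sum _ _ _)) // /C mulr_sumr ler_sum // => k _.
  have [h1 h2] := hxd k; have [h3 h4] := hyd k.
  set u := x' k - y' k; set v := x k - y k.
  have -> : u ^+ 2 - v ^+ 2 = (u - v) * (u + v) by ring.
  have huv : `|u - v| <= 2 * del.
    have -> : u - v = (x' k - x k) - (y' k - y k) by rewrite /u /v; ring.
    by rewrite (le_trans (ler_normB _ _)) //; lra.
  have huv1 : `|u - v| <= 2.
    have -> : u - v = (x' k - x k) - (y' k - y k) by rewrite /u /v; ring.
    by rewrite (le_trans (ler_normB _ _)) //; lra.
  have hupv : `|u + v| <= 2 + 2 * `|v|.
    have -> : u + v = (u - v) + 2 * v by ring.
    by rewrite (le_trans (ler_normD _ _)) // normrM ger0_norm //; lra.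
  rewrite normrM.
  have := normr_ge0 (u - v); have := normr_ge0 (u + v); have := normr_ge0 v.
  move=> n1 n2 n3.
  apply: (le_trans (y := (2 * del) * (2 + 2 * `|v|))); last lra.
  by apply: ler_pM.
have hdC : del * C < e ^+ 2.
  rewrite /del mulrAC ltr_pdivrMr // ltr_pM2l ?exprn_gt0 //; lra.
have hsq := @sqrt_diff_sq R (\sum_(k < d) (x k - y k) ^+ 2) (\sum_(k < d) (x' k - y' k) ^+ 2)
  (sumr_ge0 _ (fun k _ => sqr_ge0 (x k - y k))) (sumr_ge0 _ (fun k _ => sqr_ge0 (x' k - y' k))).
rewrite /Defs.edist -sqrtr_sqr -(@ger0_norm _ e) ?(ltW e0) // -sqrtr_sqr ltr_sqrt ?exprn_gt0 //.
exact: (le_lt_trans hsq (le_lt_trans hb hdC)).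
Qed.

Lemma fin_unif (R : realType) (T : finType) (Q : T -> R -> Prop) :
  (forall t, exists del, 0 < del /\ Q t del) ->
  (forall t a b, 0 < a -> a <= b -> Q t b -> Q t a) ->
  exists del, 0 < del /\ forall t, Q t del.
Proof.
move=> hQ hmon.
suff hs : forall s : seq T, exists del, 0 < del /\ forall t, t \in s -> Q t del.
  have [del [del0 hd]] := hs (enum T).
  by exists del; split => // t; apply: hd; rewrite mem_enum.
elim=> [|t s [d2 [d20 h2]]]; first by exists 1; split.
have [d1 [d10 h1]] := hQ t.
exists (Num.min d1 d2); split; first by rewrite lt_min d10 d20.
move=> u; rewrite in_cons => /orP[/eqP -> | us].
  by apply: (hmon _ _ d1) => //; [rewrite lt_min d10 d20 | rewrite ge_min lexx].
by apply: (hmon _ _ d2) => //; [rewrite lt_min d10 d20 | rewrite ge_min lexx orbT | apply: h2].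
Qed.

Lemma sum_lt_one (R : realType) (I : finType) (P : pred I) (F H : I -> R) (i0 : I) :
  P i0 -> (forall i, P i -> F i <= H i) -> F i0 < H i0 ->
  \sum_(i | P i) F i < \sum_(i | P i) H i.
Proof.
move=> Pi0 hle hlt.
rewrite (bigD1 i0) //= [X in _ < X](bigD1 i0) //=.
apply: ltr_leD => //; apply: ler_sum => i /andP[Pi _]; exact: hle.
Qed.

Theorem theorem3p3 (R : realType) (d n : nat) (G : rel 'I_n.+1) (l : nat)
  (p : config R d n) (Eij : 'I_n.+1 -> 'I_n.+1 -> R -> R) :
  symmetric G -> irreflexive G ->
  pinned p l -> bar_like G Eij p ->
  pinned_local_min l (energy G Eij) p /\
  (pinned_rigid G p l <-> pinned_strict_local_min l (energy G Eij) p).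
Proof.
move=> hsym hirr _ hbar.
pose Q (ij : 'I_n.+1 * 'I_n.+1) (del : R) : Prop :=
  (ij.1 < ij.2)%N -> G ij.1 ij.2 -> forall q : config R d n, config_near del p q ->
    Eij ij.1 ij.2 (Defs.edist (p ij.1) (p ij.2)) <= Eij ij.1 ij.2 (Defs.edist (q ij.1) (q ij.2)) /\
    (Defs.edist (q ij.1) (q ij.2) != Defs.edist (p ij.1) (p ij.2) ->
     Eij ij.1 ij.2 (Defs.edist (p ij.1) (p ij.2)) < Eij ij.1 ij.2 (Defs.edist (q ij.1) (q ij.2))).
have [del [del0 hQ]] : exists del, 0 < del /\ forall t, Q t del.
  apply: fin_unif.
    move=> [i j].
    case: (boolP ((i < j)%N && G i j)) => [/andP[hij hG]|hno]; last first.
      by exists 1; split => // h1 h2; exfalso; move: hno; rewrite h1 h2.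
    have [_ _ [e [e0 he]]] := hbar i j hij hG.
    have [dl [dl0 hdl]] := @edist_cont R d (p i) (p j) e e0.
    exists dl; split => // _ _ q hq /=.
    have hlt := hdl (q i) (q j) (hq i) (hq j).
    have hs : Defs.edist (q i) (q j) != Defs.edist (p i) (p j) ->
        Eij i j (Defs.edist (p i) (p j)) < Eij i j (Defs.edist (q i) (q j)).
      by move=> hne; apply: he.
    split => //.
    case: (eqVneq (Defs.edist (q i) (q j)) (Defs.edist (p i) (p j))) => [->|hne] //.
    exact: ltW (hs hne).
  move=> [i j] a b a0 ab hb h1 h2 q hq; apply: hb => // i' k.
  exact: lt_le_trans (hq i' k) ab.
have hle : forall q, config_near del p q -> energy G Eij p <= energy G Eij q.
  move=> q hq; rewrite /energy; apply: ler_sum => i _; apply: ler_sum => j /andP[hij hG].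
  exact: (hQ (i, j) hij hG q hq).1.
split; first by exists del; split => // q _ hq; apply: hle.
split.
- move=> [er [er0 hr]].
  exists (Num.min del er); split; first by rewrite lt_min del0 er0.
  move=> q hq hnear hne.
  have hq1 : config_near del p q.
    by move=> i k; apply: (lt_le_trans (hnear i k)); rewrite ge_min lexx.
  have hq2 : config_near er p q.
    by move=> i k; apply: (lt_le_trans (hnear i k)); rewrite ge_min lexx orbT.
  have [i [j [hG hij]]] : exists i j, G i j /\
      Defs.edist (q i) (q j) != Defs.edist (p i) (p j).
    case: (pselect (exists i j, G i j /\ Defs.edist (q i) (q j) != Defs.edist (p i) (p j))) => // hno.
    exfalso; apply: hne; apply: hr => // i j hG.
    case: (eqVneq (Defs.edist (q i) (q j)) (Defs.edist (p i) (p j))) => // h.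
    by exfalso; apply: hno; exists i, j.
  have [a [b [ab [hGab hne2]]]] : exists a b : 'I_n.+1, (a < b)%N /\ G a b /\
      Defs.edist (q a) (q b) != Defs.edist (p a) (p b).
    case: (ltngtP i j) => [lij|lji|eij].
    + by exists i, j.
    + exists j, i; split => //; split; first by rewrite hsym.
      by rewrite edist_sym [Defs.edist (p j) _]edist_sym.
    + have eq : i = j by exact: val_inj.
      by move: hG; rewrite eq hirr.
  rewrite /energy.
  apply: (@sum_lt_one R _ _ _ _ a) => //.
    by move=> i' _; apply: ler_sum => j' /andP[h1 h2]; exact: (hQ (i', j') h1 h2 q hq1).1.
  apply: (@sum_lt_one R _ _ _ _ b); first by rewrite ab hGab.
    by move=> j' /andP[h1 h2]; exact: (hQ (a, j') h1 h2 q hq1).1.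
  exact: (hQ (a, b) ab hGab q hq1).2 hne2.
- move=> [es [es0 hs]].
  exists es; split => // q hq hnear hedge.
  case: (pselect (q = p)) => // hne.
  have := hs q hq hnear hne.
  have -> : energy G Eij q = energy G Eij p.
    rewrite /energy; apply: eq_bigr => i _; apply: eq_bigr => j /andP[_ hG].
    by rewrite hedge.
  by rewrite ltxx.
Qed.
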